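(* Let $n\ge 2$ and $0=x_0<x_1<\dots<x_n<x_{n+1}=1$. Let $\hat F_n(x)=\frac1n\#\{i\in\{1,\dots,n\}: x_i\le x\}$ for $x\in[0,1]$, so $\hat F_n(x)=\frac{i-1}{n}$ for $x\in[x_{i-1},x_i)$, $i=1,\dots,n+1$, and $\hat F_n(1)=1$. Set $p_1=0$, $p_i=\frac1n$ for $i=2,\dots,n+1$, $\delta_1=\frac{n-1}{n^2}$, $\delta_i=-\frac1{n^2}$ for $i=2,\dots,n$, and define for $u\in\mathcal{F}([0,1])$ $$T_pu(x)=p_iu(x)+\sum_{j=1}^{i-1}p_j+\sum_{j=1}^{i-1}\delta_j\quad\text{for }x\in[x_{i-1},x_i),\ i=1,\dots,n+1,$$ with the last interval taken as $[x_n,1]$. Then $T_p$ maps $\mathcal{F}([0,1])$ into itself, $T_p\hat F_n=\hat F_n$, and for every $u\in\mathcal{F}([0,1])$, $d_{sup}(T_p^{s}u,\hat F_n)\to 0$ as $s\to\infty$, where $T_p^s$ denotes the $s$-fold iterate.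
   Context: $\mathcal{F}([0,1])$ denotes the set of distribution functions on $[0,1]$, i.e. functions $F:[0,1]\to[0,1]$ that are non-decreasing, right-continuous, with $F(0)=0$ and $F(1)=1$; $d_{sup}(F,G)=\sup_{x\in[0,1]}|F(x)-G(x)|$. *)

(* Defs.v *)
From HB Require Import structures.
From mathcomp Require Import all_boot all_order all_algebra.
From mathcomp Require Import all_classical all_reals all_analysis.
Set Implicit Arguments. Unset Strict Implicit. Unset Printing Implicit Defensive.
Import Order.TTheory GRing.Theory Num.Theory.
Import numFieldNormedType.Exports.
Local Open Scope classical_set_scope.
Local Open Scope ring_scope.

(* Distribution functions on [0,1]; only the values on [0,1] matter. *)
Definition isDF {R : realType} (F : R -> R) : Prop :=
  [/\ (forall t, 0 <= t <= 1 -> 0 <= F t <= 1),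
      (forall s t, 0 <= s -> s <= t -> t <= 1 -> F s <= F t),
      (forall t, 0 <= t < 1 -> forall e : R, 0 < e ->
          exists2 d : R, 0 < d & forall y, t <= y < t + d -> y <= 1 ->
             `|F y - F t| < e),
      F 0 = 0 & F 1 = 1].

Definition dsup {R : realType} (F G : R -> R) : R :=
  sup [set `|F t - G t| | t in [set t : R | 0 <= t <= 1]].

Definition Fhat {R : realType} (n : nat) (x : nat -> R) (t : R) : R :=
  \sum_(1 <= i < n.+1) (if x i <= t then 1 else 0) / n%:R.

Definition pw {R : realType} (n i : nat) : R :=
  if i == 1%N then 0 else 1 / n%:R.
Definition dl {R : realType} (n i : nat) : R :=
  if i == 1%N then (n%:R - 1) / (n%:R ^+ 2) else - (1 / (n%:R ^+ 2)).

Definition in_piece {R : realType} (n : nat) (x : nat -> R) (i : nat) (t : R) : bool :=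
  if i == n.+1 then (x n <= t) && (t <= 1) else (x i.-1 <= t) && (t < x i).

Definition Tp {R : realType} (n : nat) (x : nat -> R) (u : R -> R) (t : R) : R :=
  \sum_(1 <= i < n.+2)
     (if in_piece n x i t
      then pw n i * u t + \sum_(1 <= j < i) pw n j + \sum_(1 <= j < i) dl n j
      else 0).

(* Main.v *)
Require Import Defs.
From HB Require Import structures.
From mathcomp Require Import all_boot all_order all_algebra.
From mathcomp Require Import all_classical all_reals all_analysis.
From mathcomp Require Import ring lra zify.
Import Order.TTheory GRing.Theory Num.Theory.
Import numFieldNormedType.Exports.
Local Open Scope classical_set_scope.
Local Open Scope ring_scope.
Set Implicit Arguments. Unset Strict Implicit.

Lemma xlt (R : realType) (n : nat) (x : nat -> R)
  (hinc : forall i : nat, (i <= n)%N -> x i < x i.+1) a b :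
  (a < b)%N -> (b <= n.+1)%N -> x a < x b.
Proof.
elim: b => // b IH; rewrite ltnS leq_eqVlt => /orP [/eqP -> hb|hab hb].
  by apply: hinc.
by apply: lt_trans (IH hab (ltnW hb)) (hinc _ _).
Qed.

Lemma xle (R : realType) (n : nat) (x : nat -> R)
  (hinc : forall i : nat, (i <= n)%N -> x i < x i.+1) a b :
  (a <= b)%N -> (b <= n.+1)%N -> x a <= x b.
Proof.
rewrite leq_eqVlt => /orP [/eqP -> //|hab hb].
by apply: ltW; exact: (@xlt R n x hinc a b hab hb).
Qed.

Definition Aw {R : realType} (n i : nat) : R :=
  \sum_(1 <= j < i) pw n j + \sum_(1 <= j < i) dl n j.

Lemma Aw_eq (R : realType) (n : nat) (hn : (2 <= n)%N) k :
  Aw n k.+1 = k%:R * (n%:R - 1) / n%:R ^+ 2 :> R.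
Proof.
have n0 : n%:R != 0 :> R by rewrite pnatr_eq0 -lt0n (leq_trans _ hn).
elim: k => [|k IH].
  by rewrite /Aw !big_geq // addr0 mul0r mul0r.
rewrite /Aw !(big_nat_recr k.+1) //= addrACA -/(Aw n k.+1) IH /pw /dl.
case: k {IH} => [|k] /=.
  by rewrite add0r mul0r mul0r add0r mul1r.
rewrite -[(k.+2)%:R]natr1; by field.
Qed.

Lemma piece_exists (R : realType) (n : nat) (x : nat -> R) (hx0 : x 0%N = 0)
  (t : R) : 0 <= t -> t <= 1 -> exists2 i, (0 < i <= n.+1)%N & in_piece n x i t.
Proof.
move=> t0 t1.
suff H : forall k, (k <= n)%N -> x (n - k)%N <= t ->
    exists2 i, (0 < i <= n.+1)%N & in_piece n x i t.
  by apply: (H n (leqnn n)); rewrite subnn hx0.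
elim => [|k IH] hk hxt.
  exists n.+1; first by rewrite leqnn.
  by rewrite /in_piece eqxx -{1}(subn0 n) hxt t1.
have [h|h] := leP (x (n - k)%N) t.
  by apply: IH => //; apply: ltnW.
exists (n - k)%N; first by apply/andP; split; lia.
have e : (n - k).-1 = (n - k.+1)%N by lia.
have ne : (n - k)%N == n.+1 = false by apply/eqP; lia.
by rewrite /in_piece ne e hxt h.
Qed.

Lemma piece_lo (R : realType) (n : nat) (x : nat -> R) i t :
  in_piece n x i t -> x i.-1 <= t.
Proof.
rewrite /in_piece; case: eqP => [-> /andP [] //|_ /andP [] //].
Qed.

Lemma piece_hi (R : realType) (n : nat) (x : nat -> R) i t :
  in_piece n x i t -> (i <= n)%N -> t < x i.
Proof.
rewrite /in_piece; case: eqP => [-> _|_ /andP [] //]; by rewrite ltnn.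
Qed.

Lemma piece_le1 (R : realType) (n : nat) (x : nat -> R) (hx1 : x n.+1 = 1)
  (hinc : forall i : nat, (i <= n)%N -> x i < x i.+1) i t :
  (i <= n.+1)%N -> in_piece n x i t -> t <= 1.
Proof.
move=> hi; rewrite /in_piece; case: eqP => [_ /andP [] //|hne /andP [_ h]].
rewrite -hx1; apply: ltW; apply: lt_le_trans h _.
apply: (@xle R n x hinc) => //; lia.
Qed.

Lemma piece_lt (R : realType) (n : nat) (x : nat -> R)
  (hinc : forall i : nat, (i <= n)%N -> x i < x i.+1) i j s t :
  (i < j)%N -> (j <= n.+1)%N -> s <= t -> in_piece n x j s -> in_piece n x i t -> False.
Proof.
move=> hij hj hst hs ht.
have h1 := piece_lo hs.
have h2 := piece_hi ht (leq_trans hij hj).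
have h3 : x i <= x j.-1 by apply: (@xle R n x hinc); lia.
have := le_lt_trans (le_trans h3 (le_trans h1 hst)) h2.
by rewrite ltxx.
Qed.

Lemma piece_uniq (R : realType) (n : nat) (x : nat -> R)
  (hinc : forall i : nat, (i <= n)%N -> x i < x i.+1) i j t :
  (i <= n.+1)%N -> (j <= n.+1)%N -> in_piece n x i t -> in_piece n x j t -> i = j.
Proof.
move=> hi hj pi pj.
case: (ltngtP i j) => // h; exfalso.
  exact: (@piece_lt R n x hinc i j t t h hj (lexx t) pj pi).
exact: (@piece_lt R n x hinc j i t t h hi (lexx t) pi pj).
Qed.

Lemma piece_mono (R : realType) (n : nat) (x : nat -> R)
  (hinc : forall i : nat, (i <= n)%N -> x i < x i.+1) i j s t :
  (i <= n.+1)%N -> s <= t -> in_piece n x i s -> in_piece n x j t -> (i <= j)%N.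
Proof.
move=> hi hst pi pj; rewrite leqNgt; apply/negP => h.
exact: (@piece_lt R n x hinc j i s t h hi hst pi pj).
Qed.

Lemma Tp_eq (R : realType) (n : nat) (x : nat -> R)
  (hinc : forall i : nat, (i <= n)%N -> x i < x i.+1) (u : R -> R) i t :
  (0 < i <= n.+1)%N -> in_piece n x i t -> Tp n x u t = pw n i * u t + Aw n i.
Proof.
move=> /andP [i0 hi] pi.
rewrite /Tp (bigD1_seq i); last exact: iota_uniq; last by rewrite mem_index_iota; lia.
rewrite pi /= [X in _ + X = _]big1_seq ?addr0 /Aw ?addrA // => j /andP [hji].
rewrite mem_index_iota => hj.
case: ifP => // pj; exfalso.
move/eqP: hji; apply; apply: (@piece_uniq R n x hinc) => //; lia.
Qed.

Lemma Fhat_eq (R : realType) (n : nat) (x : nat -> R)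
  (hinc : forall i : nat, (i <= n)%N -> x i < x i.+1) i t :
  (0 < i <= n.+1)%N -> in_piece n x i t -> Fhat n x t = (i.-1)%:R / n%:R.
Proof.
move=> /andP [i0 hi] pi.
rewrite /Fhat (@big_cat_nat _ _ _ i) //=.
rewrite (@eq_big_nat _ _ _ 1 i _ (fun _ => 1 / n%:R)); last first.
  move=> k /andP [k1 ki]; rewrite ifT //.
  apply: le_trans (piece_lo pi); apply: (@xle R n x hinc); lia.
rewrite (@eq_big_nat _ _ _ i n.+1 _ (fun _ => 0)); last first.
  move=> k /andP [k1 ki]; rewrite ifF ?mul0r //.
  apply/negbTE; rewrite -ltNge; apply: lt_le_trans (piece_hi pi _) _; first lia.
  apply: (@xle R n x hinc); lia.
by rewrite !sumr_const_nat mul0rn addr0 subn1 -[LHS]mulr_natl mulrA mulr1.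
Qed.

Lemma n_facts (R : realType) (n : nat) (hn : (2 <= n)%N) :
  (2 <= n%:R :> R) /\ (0 < n%:R :> R).
Proof.
have h : (2%:R <= n%:R :> R) by rewrite ler_nat.
split => //; lra.
Qed.

Lemma val_bounds (R : realType) (n : nat) (hn : (2 <= n)%N) i (v : R) :
  (0 < i <= n.+1)%N -> 0 <= v -> v <= 1 ->
  0 <= pw n i * v + Aw n i /\ pw n i * v + Aw n i <= 1.
Proof.
move=> /andP [i0 hi] v0 v1.
have [n2 n0] := n_facts R hn.
case: i i0 hi => // k _ hk; rewrite Aw_eq // /pw.
case: (k =P 0%N) => [->|k0] /=.
  by rewrite mul0r mul0r mul0r addr0; lra.
have kn : (k%:R <= n%:R :> R) by rewrite ler_nat.
have k0' : (0 <= k%:R :> R) by [].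
have e1 : 0 <= k%:R * (n%:R - 1) / n%:R ^+ 2 :> R.
  by apply: divr_ge0; [apply: mulr_ge0; lra | apply: exprn_ge0; lra].
have e2 : k%:R * (n%:R - 1) / n%:R ^+ 2 <= n%:R * (n%:R - 1) / n%:R ^+ 2 :> R.
  apply: ler_wpM2r; first by rewrite invr_ge0; apply: exprn_ge0; lra.
  by apply: ler_wpM2r => //; lra.
have e3 : n%:R * (n%:R - 1) / n%:R ^+ 2 = 1 - 1 / n%:R :> R.
  by field; lra.
have e4 : 0 <= 1 / n%:R * v :> R by apply: mulr_ge0 => //; rewrite divr_ge0 //; lra.
have e5 : 1 / n%:R * v <= 1 / n%:R :> R.
  by apply: ler_piMr => //; rewrite divr_ge0 //; lra.
have -> : (k.+1 == 1%N) = false by apply/eqP; lia.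
split; lra.
Qed.

Lemma val_mono (R : realType) (n : nat) (hn : (2 <= n)%N) i j (v w : R) :
  (0 < i)%N -> (i <= j)%N -> (j <= n.+1)%N -> 0 <= v -> v <= w -> w <= 1 ->
  pw n i * v + Aw n i <= pw n j * w + Aw n j.
Proof.
move=> i0 ij hj v0 vw w1.
have [n2 n0] := n_facts R hn.
have [hj0 _] := @val_bounds R n hn j w (ltac:(apply/andP; split => //; lia)) (le_trans v0 vw) w1.
case: (i =P 1%N) => [->|i1].
  by rewrite /pw eqxx mul0r add0r Aw_eq // mul0r mul0r.
have j1 : j != 1%N by apply/eqP; lia.
rewrite /pw (introF eqP i1) (negbTE j1).
apply: lerD.
  by apply: ler_wpM2l => //; rewrite divr_ge0 //; lra.
case: i i0 ij i1 => // k _ ij _; case: j ij hj hj0 j1 => // m km _ _ _.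
rewrite !Aw_eq //; apply: ler_wpM2r; first by rewrite invr_ge0; apply: exprn_ge0; lra.
by apply: ler_wpM2r; [lra | rewrite ler_nat].
Qed.

Lemma Tp_DF (R : realType) (n : nat) (hn : (2 <= n)%N)
  (x : nat -> R) (hx0 : x 0%N = 0) (hx1 : x n.+1 = 1)
  (hinc : forall i : nat, (i <= n)%N -> x i < x i.+1) (u : R -> R) :
  isDF u -> isDF (Tp n x u).
Proof.
case=> ub umono urc u0 u1.
have [n2 n0] := n_facts R hn.
split.
- move=> t /andP [t0 t1].
  have [i hi pi] := piece_exists n hx0 t0 t1.
  have [v0 v1] := andP (ub t (ltac:(by apply/andP))).
  rewrite (Tp_eq hinc u hi pi).
  have [h1 h2] := val_bounds hn hi v0 v1.
  by rewrite h1 h2.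
- move=> s t s0 st t1.
  have t0 := le_trans s0 st.
  have s1 := le_trans st t1.
  have [i hi pi] := piece_exists n hx0 s0 s1.
  have [j hj pj] := piece_exists n hx0 t0 t1.
  rewrite (Tp_eq hinc u hi pi) (Tp_eq hinc u hj pj).
  have [v0 _] := andP (ub s (ltac:(by apply/andP))).
  have [_ w1] := andP (ub t (ltac:(by apply/andP))).
  move: hi hj => /andP [i0 hi] /andP [j0 hj].
  apply: val_mono => //; last exact: umono.
  exact: (piece_mono hinc hi st pi pj).
- move=> t /andP [t0 t1] e e0.
  have [i hi pi] := piece_exists n hx0 t0 (ltW t1).
  have [d d0 hd] := urc t (ltac:(by apply/andP)) e e0.
  have key : forall y, in_piece n x i y -> t <= y < t + d -> y <= 1 ->
      `|Tp n x u y - Tp n x u t| < e.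
    move=> y py /andP [ty yd] y1.
    rewrite (Tp_eq hinc u hi pi) (Tp_eq hinc u hi py).
    have -> : pw n i * u y + Aw n i - (pw n i * u t + Aw n i) =
              pw n i * (u y - u t) by ring.
    apply: le_lt_trans (hd y (ltac:(by apply/andP)) y1).
    rewrite normrM; apply: ler_piMl => //.
    rewrite /pw; case: ifP => _; first by rewrite normr0.
    rewrite ger0_norm ?divr_ge0 //; try lra.
    by rewrite ler_pdivrMr // mul1r; lra.
  case: (i =P n.+1) => [ei|ni].
    exists d => // y /andP [ty yd] y1; apply: key => //; last by apply/andP.
    rewrite ei /in_piece eqxx y1 andbT.
    by apply: le_trans ty; move: pi; rewrite ei /in_piece eqxx => /andP [].
  have hin : (i <= n)%N by move: hi => /andP [_]; rewrite leq_eqVlt ltnS => /orP [/eqP|].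
  have xt := piece_hi pi hin.
  exists (Num.min d (x i - t)); first by rewrite lt_min d0 subr_gt0 xt.
  move=> y /andP [ty]; rewrite -ltrBlDl lt_min => /andP [yd yx] y1.
  apply: key => //; last by rewrite ty /=; lra.
  rewrite /in_piece (introF eqP ni) (le_trans (piece_lo pi) ty) /=.
  lra.
- have p1 : in_piece n x 1 0.
    have -> : in_piece n x 1 0 = (x 0 <= 0) && (0 < x 1).
      by rewrite /in_piece ifF //; apply/eqP; lia.
    by rewrite hx0 lexx /= -hx0 (hinc 0%N).
  have h1 : (0 < 1 <= n.+1)%N by [].
  rewrite (Tp_eq hinc u h1 p1).
  by rewrite /pw eqxx mul0r add0r Aw_eq // mul0r mul0r.
- have p1 : in_piece n x n.+1 1.
    rewrite /in_piece eqxx lexx andbT -hx1; apply: ltW; exact: hinc.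
  have h1 : (0 < n.+1 <= n.+1)%N by rewrite leqnn.
  rewrite (Tp_eq hinc u h1 p1) Aw_eq // u1.
  rewrite /pw ifF; last by apply/eqP; lia.
  by field; lra.
Qed.

Unset Implicit Arguments.

Theorem mainTheorem8 (R : realType) (n : nat) (hn : (2 <= n)%N)
  (x : nat -> R) (hx0 : x 0%N = 0) (hx1 : x n.+1 = 1)
  (hinc : forall i : nat, (i <= n)%N -> x i < x i.+1) :
  (forall u : R -> R, isDF u -> isDF (Tp n x u)) /\
  (forall t : R, 0 <= t <= 1 -> Tp n x (Fhat n x) t = Fhat n x t) /\
  (forall u : R -> R, isDF u ->
     (fun s : nat => dsup (iter s (Tp n x) u) (Fhat n x)) @ \oo --> (0 : R)).
Proof.
have [n2 n0] := n_facts R hn.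
split; first exact: Tp_DF.
have hfix : forall t, 0 <= t <= 1 -> Tp n x (Fhat n x) t = Fhat n x t.
  move=> t /andP [t0 t1]; have [i hi pi] := piece_exists n hx0 t0 t1.
  rewrite (Tp_eq hinc _ hi pi) (Fhat_eq hinc hi pi).
  case: i hi pi => // k hk _; rewrite Aw_eq //= /pw.
  case: (k =P 0%N) => [->|k0]; first by rewrite !mul0r add0r.
  rewrite ifF; last by apply/eqP; lia.
  by field; lra.
split => // u uDF.
have [ub _ _ _ _] := uDF.
have Fb : forall t, 0 <= t <= 1 -> 0 <= Fhat n x t <= 1.
  move=> t /andP [t0 t1]; have [i hi pi] := piece_exists n hx0 t0 t1.
  rewrite (Fhat_eq hinc hi pi).
  have : (i.-1 <= n)%N by lia.
  rewrite -(ler_nat R) => h.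
  apply/andP; split; first by rewrite divr_ge0 // ltW.
  by rewrite ler_pdivrMr // mul1r.
have iter_eq : forall t, 0 <= t <= 1 -> forall i, (0 < i <= n.+1)%N ->
    in_piece n x i t -> forall s,
    iter s (Tp n x) u t - Fhat n x t = pw n i ^+ s * (u t - Fhat n x t).
  move=> t ht i hi pi; elim => [|s IH]; first by rewrite expr0 mul1r.
  have e := hfix t ht; rewrite (Tp_eq hinc _ hi pi) in e.
  rewrite /= (Tp_eq hinc _ hi pi) -{1}e exprS -mulrA -IH; ring.
have bnd : forall s t, 0 <= t <= 1 ->
    `|iter s (Tp n x) u t - Fhat n x t| <= (1 / n%:R) ^+ s.
  move=> s t ht; have [t0 t1] := andP ht.
  have [i hi pi] := piece_exists n hx0 t0 t1.
  rewrite (iter_eq t ht i hi pi) normrM normrX -[X in _ <= X]mulr1.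
  have [a0 a1] := andP (ub t ht); have [b0 b1] := andP (Fb t ht).
  apply: ler_pM => //.
  - apply: lerXn2r; rewrite ?nnegrE ?divr_ge0 //; try lra.
    rewrite /pw; case: ifP => _; first by rewrite normr0 divr_ge0 //; lra.
    by rewrite ger0_norm // divr_ge0 //; lra.
  - by rewrite ler_norml; apply/andP; split; lra.
have ne : forall s, [set `|iter s (Tp n x) u t - Fhat n x t| | t in
    [set t : R | 0 <= t <= 1]] !=set0.
  move=> s; exists `|iter s (Tp n x) u 0 - Fhat n x 0|; exists 0 => //=.
  by rewrite lexx ler01.
apply: (@squeeze_cvgr _ _ _ _ (fun=> 0) (fun s => (1 / n%:R) ^+ s)).
- apply: nearW => s; apply/andP; split.
    apply: le_trans (normr_ge0 (iter s (Tp n x) u 0 - Fhat n x 0)) _.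
    apply: ub_le_sup; last by exists 0 => //=; rewrite lexx ler01.
    exists ((1 / n%:R) ^+ s) => _ [t ht <-]; exact: bnd.
  by apply: ge_sup => // _ [t ht <-]; exact: bnd.
- exact: cvg_cst.
- apply: cvg_expr; rewrite ger0_norm ?divr_ge0 //; try lra.
  by rewrite ltr_pdivrMr // mul1r; lra.
Qed.
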